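(* In the setting below, for orthogonal modified types $\boldsymbol\mu,\boldsymbol\nu,\boldsymbol\lambda$: $r_{\boldsymbol\mu,\boldsymbol\nu}^{\boldsymbol\lambda}=0$ whenever $|\boldsymbol\lambda|>|\boldsymbol\mu|+|\boldsymbol\nu|$, and whenever $|\boldsymbol\lambda|=|\boldsymbol\mu|+|\boldsymbol\nu|$ the polynomial $r_{\boldsymbol\mu,\boldsymbol\nu}^{\boldsymbol\lambda}$ is a constant belonging to $\mathbb{Z}$. (That is, the algebra over $\mathcal{R}_q[\tfrac12]$ with basis $K_{\boldsymbol\mu}$ and structure constants $r_{\boldsymbol\mu,\boldsymbol\nu}^{\boldsymbol\lambda}$ is filtered by $|\cdot|$ and its associated graded algebra has integer structure constants.)
   Context: $q$ odd prime power. $G_n(\mathbb{F}_q)$ is one of the families $O^+_{2n}$, $O^-_{2n}$, $O_{2n+1}$: the symmetry groups of the symmetric forms $\sum_{i=1}^n(x_{2i-1}y_{2i}+x_{2i}y_{2i-1})$ on $\mathbb{F}_q^{2n}$; $x_1y_1-\epsilon x_2y_2+\sum_{i=2}^n(x_{2i-1}y_{2i}+x_{2i}y_{2i-1})$ on $\mathbb{F}_q^{2n}$ ($\epsilon$ a fixed non-square); $x_1y_1+\sum_{i=1}^n(x_{2i}y_{2i+1}+x_{2i+1}y_{2i})$ on $\mathbb{F}_q^{2n+1}$, respectively, with $G_n\subset G_{n+1}$ via $g\mapsto\operatorname{diag}(g,\mathrm{Id}_2)$. Elements $g\in G_n$, $g'\in G_{n'}$ have the same orthogonal modified type if their images in some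 common $G_N$ are conjugate in $G_N$; a modified type is such a class, of size $|\boldsymbol\mu|=\operatorname{rank}(g-\mathrm{Id})$. $X_{\boldsymbol\mu,m}$ is the sum of elements of $G_m(\mathbb{F}_q)$ of modified type $\boldsymbol\mu$. $[m]_q=(q^m-1)/(q-1)$; $\mathcal{R}_q[\tfrac12]$ is the $\mathbb{Z}[\tfrac12,q,q^{-1}]$-span in $\mathbb{Q}[x]$ of $\binom{x}{k}_q=\frac{x(x-[1]_q)\cdots(x-[k-1]_q)}{q^{k(k-1)/2}[k]_q!}$. The polynomials $r_{\boldsymbol\mu,\boldsymbol\nu}^{\boldsymbol\lambda}\in\mathcal{R}_q[\tfrac12]$ are those with $X_{\boldsymbol\mu,m}X_{\boldsymbol\nu,m}=\sum_{\boldsymbol\lambda}r_{\boldsymbol\mu,\boldsymbol\nu}^{\boldsymbol\lambda}([m]_q)X_{\boldsymbol\lambda,m}$ for all $m\ge0$. *)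

(* Defs.v *)
From HB Require Import structures.
From mathcomp Require Import all_boot all_order all_algebra.
From Stdlib Require Import ClassicalDescription.
Set Implicit Arguments. Unset Strict Implicit. Unset Printing Implicit Defensive.
Import Order.TTheory GRing.Theory Num.Theory.
Local Open Scope ring_scope.

Inductive ofamily := OPlus | OMinus | OOdd.

Definition dG (fam : ofamily) (n : nat) : nat :=
  match fam with OOdd => (2 * n).+1 | _ => (2 * n)%N end.

Definition validn (fam : ofamily) (n : nat) : bool :=
  match fam with OMinus => (0 < n)%N | _ => true end.

Section Groups.
Variable F : finFieldType.

(* hyperbolic pairing on 0-based coordinates (0,1),(2,3),... *)
Definition hyp (i j : nat) : bool := (i != j) && (i./2 == j./2).

(* Gram matrix entry (0-based indices) of the defining symmetric form *)
Definition formE (fam : ofamily) (eps : F) (i j : nat) : F :=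
  match fam with
  | OPlus => (hyp i j)%:R
  | OMinus =>
      if (i == 0%N) && (j == 0%N) then 1
      else if (i == 1%N) && (j == 1%N) then - eps
      else if (2 <= i)%N && (2 <= j)%N then (hyp i j)%:R else 0
  | OOdd =>
      if (i == 0%N) && (j == 0%N) then 1
      else if (0 < i)%N && (0 < j)%N then (hyp i.-1 j.-1)%:R else 0
  end.

Definition formB (fam : ofamily) (eps : F) (n : nat) : 'M[F]_(dG fam n) :=
  \matrix_(i, j) formE fam eps i j.

Definition inG (fam : ofamily) (eps : F) (n : nat) (g : 'M[F]_(dG fam n)) : bool :=
  (g \in unitmx) && (g^T *m formB fam eps n *m g == formB fam eps n).


(* image of g in G_N:  g |-> diag(g, Id) *)
Definition embed (fam : ofamily) (n N : nat) (g : 'M[F]_(dG fam n)) :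
    'M[F]_(dG fam N) :=
  \matrix_(i, j)
    (match (insub (val i) : option 'I_(dG fam n)),
           (insub (val j) : option 'I_(dG fam n)) with
     | Some i', Some j' => g i' j'
     | _, _ => (i == j)%:R
     end).


(* an element of some G_n, used as a representative of a modified type *)
Record modrep (fam : ofamily) := MkRep { rn : nat; rg : 'M[F]_(dG fam rn) }.

Definition validRep fam eps (x : modrep fam) : Prop :=
  validn fam (rn x) /\ inG eps (rg x).

(* same orthogonal modified type: conjugate images in a common G_N *)
Definition sameType fam eps (x y : modrep fam) : Prop :=
  exists N : nat, [/\ validn fam N, (rn x <= N)%N, (rn y <= N)%N &
    exists h : 'M[F]_(dG fam N), inG eps h /\
      embed N (rg y) = invmx h *m embed N (rg x) *m h].

Definition msize fam (x : modrep fam) : nat := \rank (rg x - 1%:M).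

(* X_{mu,m} as an element of the group algebra Q[G_m], i.e. a function
   on matrices supported on G_m *)
Definition Xel fam eps (m : nat) (mu : modrep fam) (g : 'M[F]_(dG fam m)) : rat :=
  if excluded_middle_informative (inG eps g /\ sameType eps (MkRep g) mu)
  then 1 else 0.


Definition conv fam (m : nat) (f1 f2 : 'M[F]_(dG fam m) -> rat)
    (g : 'M[F]_(dG fam m)) : rat :=
  \sum_(a : 'M[F]_(dG fam m)) \sum_(b : 'M[F]_(dG fam m) | a *m b == g)
     f1 a * f2 b.


(* sum_lambda c_lambda X_{lambda,m}, c given as a function of types *)
Definition linX fam eps (m : nat) (c : modrep fam -> rat) (g : 'M[F]_(dG fam m))
  : rat := if inG eps g then c (MkRep g) else 0.


End Groups.

Arguments embed {F fam} n N g.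
Arguments inG {F fam} eps n g.
Arguments Xel {F fam} eps m mu g.
Arguments conv {F fam} m f1 f2 g.
Arguments linX {F fam} eps m c g.

Definition qint (q m : nat) : rat := ((q%:Q) ^+ m - 1) / (q%:Q - 1).

Definition qfact (q k : nat) : rat := \prod_(i < k) qint q i.+1.

Definition qbinom (q k : nat) : {poly rat} :=
  ((q%:Q) ^+ 'C(k, 2) * qfact q k)^-1 *: \prod_(i < k) ('X - (qint q i)%:P).

Definition inZhq (q : nat) (c : rat) : Prop :=
  exists (a : int) (i j : nat), c = a%:~R / (2%:Q ^+ i * (q%:Q) ^+ j).

Definition inRq (q : nat) (p : {poly rat}) : Prop :=
  exists (n : nat) (c : nat -> rat),
    (forall k, inZhq q (c k)) /\ p = \sum_(k < n) c k *: qbinom q k.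

(* Main.v *)
Require Import Defs.
From HB Require Import structures.
From mathcomp Require Import all_boot all_order all_algebra.
From mathcomp Require Import zify.
From Stdlib Require Import ClassicalDescription.
Set Implicit Arguments. Unset Strict Implicit. Unset Printing Implicit Defensive.
Import Order.TTheory GRing.Theory Num.Theory.
Local Open Scope ring_scope.

Section Gen.
Variable F : fieldType.

Lemma sum_delta1 (p : nat) (i : nat) (k0 : 'I_p) (f : 'I_p -> F) : val k0 = i ->
  \sum_(k < p) ((val k == i)%:R * f k) = f k0.
Proof.
move=> <-; rewrite (bigD1 k0) //= eqxx mul1r big1 ?addr0 //.
move=> k kne; case: eqP => [ik|]; last by rewrite mul0r.
by case/eqP: kne; apply: val_inj.
Qed.

Lemma sum_delta0 (p : nat) (i : nat) (f : 'I_p -> F) : (p <= i)%N ->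
  \sum_(k < p) ((val k == i)%:R * f k) = 0.
Proof.
move=> ip; rewrite big1 // => k _; case: eqP => [ik|]; last by rewrite mul0r.
by move: (ltn_ord k); rewrite ik ltnNge ip.
Qed.

Definition Em (d D : nat) : 'M[F]_(d, D) := \matrix_(i, j) ((val i == val j)%:R).

Lemma EEt d D : (d <= D)%N -> Em d D *m (Em d D)^T = 1%:M.
Proof.
move=> le; apply/matrixP => i j; rewrite !mxE.
under eq_bigr => k _ do rewrite !mxE eq_sym.
rewrite (sum_delta1 _ (k0 := widen_ord le i)) //=.
by rewrite eq_sym.
Qed.

Lemma EtXE_in d D (X : 'M[F]_d) (i j : 'I_D) (i' j' : 'I_d) :
  val i = val i' -> val j = val j' ->
  ((Em d D)^T *m X *m Em d D) i j = X i' j'.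
Proof.
move=> ei ej; rewrite !mxE.
under eq_bigr => l _ do rewrite !mxE.
under eq_bigr => l _ do (under eq_bigr => k _ do rewrite !mxE).
under eq_bigr => l _ do rewrite (sum_delta1 _ (k0 := i')) //.
under eq_bigr => l _ do rewrite mulrC.
by rewrite (sum_delta1 _ (k0 := j')).
Qed.

Lemma EtXE_out d D (X : 'M[F]_d) (i j : 'I_D) :
  (d <= i)%N || (d <= j)%N -> ((Em d D)^T *m X *m Em d D) i j = 0.
Proof.
rewrite !mxE.
under eq_bigr => l _ do rewrite !mxE.
under eq_bigr => l _ do (under eq_bigr => k _ do rewrite !mxE).
case/orP => h.
  by rewrite big1 // => l _; rewrite sum_delta0 // mul0r.
under eq_bigr => l _ do rewrite mulrC.
by rewrite sum_delta0.
Qed.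

Lemma EtE d D (i j : 'I_D) :
  ((Em d D)^T *m Em d D) i j = ((i < d)%N && (i == j :> nat))%:R.
Proof.
rewrite !mxE.
under eq_bigr => k _ do rewrite !mxE.
case: (ltnP i d) => id /=.
  by rewrite (sum_delta1 _ (k0 := Ordinal id)) // mxE.
by rewrite sum_delta0.
Qed.

Lemma Ecomp d1 d2 d3 : (d1 <= d2)%N -> Em d1 d2 *m Em d2 d3 = Em d1 d3.
Proof.
move=> le; apply/matrixP => i j; rewrite !mxE.
under eq_bigr => k _ do rewrite !mxE eq_sym.
by rewrite (sum_delta1 _ (k0 := widen_ord le i)) // mxE.
Qed.

End Gen.


Section Alg.
Variable F : fieldType.
Variables d D : nat.
Variable E : 'M[F]_(d, D).
Hypothesis hE : E *m E^T = 1%:M.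

Definition emb (x : 'M[F]_d) : 'M[F]_D := E^T *m x *m E + (1%:M - E^T *m E).

Lemma E_emb x : E *m emb x = x *m E.
Proof.
rewrite /emb mulmxDr mulmxBr !mulmxA hE ?mulmx1 ?mul1mx.
by rewrite subrr addr0.
Qed.

Lemma emb_Et x : emb x *m E^T = E^T *m x.
Proof.
rewrite /emb mulmxDl mulmxBl -!mulmxA hE ?mulmx1 ?mul1mx.
by rewrite subrr addr0.
Qed.

Lemma emb_inj x : E *m emb x *m E^T = x.
Proof. by rewrite E_emb -mulmxA hE mulmx1. Qed.

Lemma emb_mul x y : emb x *m emb y = emb (x *m y).
Proof.
rewrite [emb y]/emb mulmxDr mulmxBr mulmx1 !mulmxA !emb_Et.
rewrite /emb [E^T *m x *m E + _]addrC addrK.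
by rewrite !mulmxA.
Qed.

Lemma emb1 : emb 1%:M = 1%:M.
Proof. by rewrite /emb mulmx1 addrC subrK. Qed.

Lemma emb_sub1 x : emb x - 1%:M = E^T *m (x - 1%:M) *m E.
Proof.
rewrite /emb mulmxBr mulmxBl mulmx1.
by rewrite addrAC -addrA addKr.
Qed.

Lemma rowfreeE : row_free E.
Proof.
rewrite /row_free eqn_leq rank_leq_row /=.
by rewrite -{1}(mxrank1 F d) -hE mxrankM_maxl.
Qed.

Lemma rank_emb1 x : \rank (emb x - 1%:M) = \rank (x - 1%:M).
Proof.
rewrite emb_sub1 (mxrankMfree _ rowfreeE) -mxrank_tr trmx_mul trmxK.
by rewrite (mxrankMfree _ rowfreeE) mxrank_tr.
Qed.

Lemma emb_unit x : x \in unitmx -> emb x \in unitmx.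
Proof.
move=> xu; have := emb_mul x (invmx x); rewrite mulmxV // emb1.
by case/mulmx1_unit.
Qed.

Lemma emb_unitV x : emb x \in unitmx -> x \in unitmx.
Proof.
move=> eu.
have: x *m (E *m invmx (emb x) *m E^T) = 1%:M.
  by rewrite !mulmxA -E_emb -[E *m emb x *m invmx (emb x)]mulmxA mulmxV // mulmx1 hE.
by case/mulmx1_unit.
Qed.

End Alg.

Lemma invmx_eq (F : fieldType) n (A B : 'M[F]_n) : A *m B = 1%:M -> invmx A = B.
Proof.
move=> h; have [Au _] := mulmx1_unit h.
by rewrite -[invmx A]mulmx1 -h mulmxA mulVmx // mul1mx.
Qed.

Lemma emb_inv (F : fieldType) d D (E : 'M[F]_(d, D)) (hE : E *m E^T = 1%:M) x :
  x \in unitmx -> invmx (emb E x) = emb E (invmx x).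
Proof. by move=> xu; apply: invmx_eq; rewrite emb_mul // mulmxV // emb1. Qed.


Lemma rk_sub (F : fieldType) n (A Bm G X : 'M[F]_n) :
  G = X *m Bm + A -> (\rank A + \rank Bm <= \rank G)%N ->
  (A <= G)%MS /\ (Bm <= G)%MS.
Proof.
move=> hG hr.
have GS : (G <= Bm + A)%MS by rewrite hG; apply: addmx_sub_adds => //; exact: submxMl.
have r1 := leq_of_leqif (mxrank_adds_leqif Bm A).
have e := geq_leqif (mxrank_leqif_sup GS).
have : (\rank (Bm + A)%MS <= \rank G)%N by apply: leq_trans r1 _; rewrite addnC.
rewrite e addsmx_sub => /andP[h1 h2]; by split.
Qed.

Lemma decomp (F : fieldType) d D (E : 'M[F]_(d, D)) (hE : E *m E^T = 1%:M)
   (a b : 'M[F]_D) (g0 : 'M[F]_d) :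
  a *m b = emb E g0 ->
  (\rank (a - 1%:M)%R + \rank (b - 1%:M)%R <= \rank (a *m b - 1%:M)%R)%N ->
  a = emb E (E *m a *m E^T).
Proof.
move=> hab hr.
set A := (a - 1%:M)%R.
have G1 : a *m b - 1%:M = a *m (b - 1%:M) + A.
  by rewrite mulmxBr mulmx1 /A addrA subrK.
have [AG _] := rk_sub G1 hr.
have GE : (a *m b - 1%:M <= E)%MS.
  by rewrite hab emb_sub1 //; exact: submxMl.
have AE : (A <= E)%MS := submx_trans AG GE.
have AP : A *m E^T *m E = A.
  by rewrite -{1}(mulmxKpV AE) -[A *m pinvmx E *m E *m E^T]mulmxA hE mulmx1 mulmxKpV.
have G2 : (a *m b - 1%:M)^T = b^T *m (a^T - 1%:M) + (b^T - 1%:M).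
  by rewrite linearB /= trmx_mul trmx1 mulmxBr mulmx1 addrA subrK.
have hr2 : (\rank (b^T - 1%:M)%R + \rank (a^T - 1%:M)%R <= \rank (a *m b - 1%:M)%R^T)%N.
  by rewrite -trmx1 -!linearB /= !mxrank_tr addnC trmx1.
have [_ AG2] := rk_sub G2 hr2.
have GE2 : ((a *m b - 1%:M)^T <= E)%MS.
  by rewrite hab emb_sub1 // !trmx_mul trmxK mulmxA; exact: submxMl.
have AE2 : (A^T <= E)%MS.
  by rewrite /A linearB /= trmx1; exact: submx_trans AG2 GE2.
have PA : E^T *m E *m A = A.
  apply: trmx_inj; rewrite !trmx_mul trmxK mulmxA.
  by rewrite -{1}(mulmxKpV AE2) -[A^T *m pinvmx E *m E *m E^T]mulmxA hE mulmx1 mulmxKpV.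
have ea : a = A + 1%:M by rewrite /A subrK.
clearbody A.
have key : E^T *m (E *m a *m E^T) *m E = A + E^T *m E.
  rewrite ea !mulmxA mulmxDr mulmx1 PA !mulmxDl AP.
  by rewrite -[E^T *m E *m E^T]mulmxA hE mulmx1.
rewrite /emb key {1}ea.
by rewrite addrACA subrr addr0.
Qed.


Lemma dG_mono fam n N : (n <= N)%N -> (dG fam n <= dG fam N)%N.
Proof. by case: fam => /= h; lia. Qed.

Lemma hyp_far i j n : (i < n.*2)%N -> (n.*2 <= j)%N -> hyp i j = false.
Proof.
move=> h1 h2; rewrite /hyp; apply/negbTE; apply/nandP; right.
rewrite -ltn_half_double in h1.
have h3 : (n <= j./2)%N by rewrite leqNgt ltn_half_double -leqNgt.
by rewrite neq_ltn (leq_trans h1 h3).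
Qed.

Lemma hyp_sym i j : hyp i j = hyp j i.
Proof. by rewrite /hyp eq_sym [i./2 == _]eq_sym. Qed.

Section Fam.
Variable F : finFieldType.
Variable fam : ofamily.
Variable eps : F.

Lemma formE_sym i j : formE fam eps i j = formE fam eps j i.
Proof.
case: fam => /=.
- by rewrite [hyp i j]hyp_sym.
- case: (i == 0)%N; case: (j == 0)%N => //=; case: (i == 1)%N; case: (j == 1)%N => //=;
  by rewrite andbC [hyp i j]hyp_sym.
- case: (i == 0)%N; case: (j == 0)%N => //=;
  by rewrite andbC [hyp i.-1 j.-1]hyp_sym.
Qed.

Lemma formE_mixed n i j : (i < dG fam n)%N -> (dG fam n <= j)%N -> formE fam eps i j = 0.
Proof.
case: fam => /= h1 h2.
- by rewrite (@hyp_far i j n) //; lia.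
- have -> : (j == 0)%N = false by apply/negbTE; lia.
  have -> : (j == 1)%N = false by apply/negbTE; lia.
  rewrite !andbF /=; case: (2 <= i)%N; case: (2 <= j)%N => //=.
  by rewrite (@hyp_far i j n) //; lia.
- have -> : (j == 0)%N = false by apply/negbTE; lia.
  rewrite !andbF /=; case hi: (0 < i)%N; case: (0 < j)%N => //=.
  by rewrite (@hyp_far i.-1 j.-1 n) //; lia.
Qed.

Lemma formB_tr n : trmx (Defs.formB fam eps n) = Defs.formB fam eps n.
Proof. by apply/matrixP => i j; rewrite !mxE formE_sym. Qed.

Local Notation E n N := (Em F (dG fam n) (dG fam N)).

Lemma EB n N : (n <= N)%N -> E n N *m Defs.formB fam eps N = Defs.formB fam eps n *m E n N.
Proof.
move=> le; apply/matrixP => i j; rewrite !mxE.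
under eq_bigr => k _ do rewrite !mxE eq_sym.
rewrite (sum_delta1 _ (k0 := widen_ord (dG_mono fam le) i)) //.
under eq_bigr => k _ do rewrite [Em _ _ _ _ _]mxE mulrC.
case: (ltnP j (dG fam n)) => jd.
  by rewrite (sum_delta1 _ (k0 := Ordinal jd)) //= mxE.
by rewrite sum_delta0 //= (formE_mixed (n:=n)).
Qed.

Lemma BE n N : (n <= N)%N -> Defs.formB fam eps N *m (E n N)^T = (E n N)^T *m Defs.formB fam eps n.
Proof.
move=> le; apply: trmx_inj; rewrite !trmx_mul !trmxK !formB_tr.
exact: EB.
Qed.

Lemma embedE n N (le : (n <= N)%N) (x : 'M[F]_(dG fam n)) :
  embed n N x = emb (E n N) x.
Proof.
apply/matrixP => i j; rewrite /embed /emb mxE.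
rewrite [RHS]mxE [X in _ + X]mxE [X in _ + (_ + X)]mxE EtE [X in _ + (X + _)]mxE.
have eij : (i == j) = (val i == val j) by [].
case: (@insubP _ _ 'I_(dG fam n) (val i)) => [i' ii ei|ni];
case: (@insubP _ _ 'I_(dG fam n) (val j)) => [j' jj ej|nj].
- by rewrite (EtXE_in _ (esym ei) (esym ej)) ii /= -eij subrr addr0.
- rewrite EtXE_out; last by apply/orP; right; rewrite leqNgt; exact: nj.
  rewrite eij.
  have -> : (val i == val j) = false by apply/eqP => e; move: nj; rewrite -e ii.
  by rewrite andbF subr0 add0r.
- have ni' : (i < dG fam n)%N = false by apply/negbTE.
  rewrite EtXE_out; last by rewrite leqNgt ni.
  by rewrite ni' /= subr0 add0r.
- have ni' : (i < dG fam n)%N = false by apply/negbTE.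
  rewrite EtXE_out; last by rewrite leqNgt ni.
  by rewrite ni' /= subr0 add0r.
Qed.

End Fam.


Lemma zmod3 (V : zmodType) (a b c o : V) : a + (b - c) + (o - b) = a + (o - c).
Proof. by rewrite -addrA; congr (_ + _); rewrite addrC addrA subrK. Qed.

Section Gen2.
Variable F : fieldType.

Lemma emb_comp d1 d2 d3 (E1 : 'M[F]_(d1, d2)) (E2 : 'M[F]_(d2, d3)) x :
  emb E2 (emb E1 x) = emb (E1 *m E2) x.
Proof.
rewrite /emb mulmxDr mulmxDl mulmxBr mulmxBl mulmx1 trmx_mul !mulmxA.
by rewrite zmod3.
Qed.

Lemma emb_tr d D (E : 'M[F]_(d, D)) x : (emb E x)^T = emb E x^T.
Proof.
by rewrite /emb linearD linearB /= !trmx_mul !trmxK trmx1 mulmxA.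
Qed.

Lemma rank_conj n (h X : 'M[F]_n) : h \in unitmx ->
  \rank (invmx h *m X *m h - 1%:M) = \rank (X - 1%:M).
Proof.
move=> hu.
have -> : invmx h *m X *m h - 1%:M = invmx h *m (X - 1%:M) *m h.
  by rewrite mulmxBr mulmxBl mulmx1 mulVmx.
rewrite mxrankMfree ?row_free_unit //.
rewrite -mxrank_tr trmx_mul mxrankMfree ?mxrank_tr // row_free_unit unitmx_tr.
by rewrite unitmx_inv.
Qed.

Variables (d D : nat) (E : 'M[F]_(d, D)).
Hypothesis hE : E *m E^T = 1%:M.
Variables (Bn : 'M[F]_d) (BN : 'M[F]_D).
Hypothesis hEB : E *m BN = Bn *m E.
Hypothesis hBE : BN *m E^T = E^T *m Bn.

Let R := BN - E^T *m Bn *m E.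

Lemma ER : E *m R = 0.
Proof. by rewrite /R mulmxBr !mulmxA hE mul1mx hEB subrr. Qed.

Lemma RE : R *m E^T = 0.
Proof. by rewrite /R mulmxBl -!mulmxA hE mulmx1 hBE subrr. Qed.

Lemma emb_R y : emb E y *m R = R.
Proof.
by rewrite /emb mulmxDl mulmxBl mul1mx -!mulmxA ER !mulmx0 add0r subr0.
Qed.

Lemma R_emb y : R *m emb E y = R.
Proof.
by rewrite /emb mulmxDr mulmxBr mulmx1 !mulmxA RE !mul0mx add0r subr0.
Qed.

Lemma form_emb x : (emb E x)^T *m BN *m emb E x = E^T *m (x^T *m Bn *m x) *m E + R.
Proof.
have -> : BN = E^T *m Bn *m E + R by rewrite /R addrC subrK.
rewrite emb_tr mulmxDr mulmxDl emb_R R_emb.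
by rewrite !mulmxA emb_Et // -[_ *m Bn *m E *m emb E x]mulmxA E_emb // !mulmxA.
Qed.

Lemma form_embE x :
  ((emb E x)^T *m BN *m emb E x == BN) = (x^T *m Bn *m x == Bn).
Proof.
rewrite form_emb; apply/eqP/eqP => h.
  have := congr1 (fun M => E *m M *m E^T) h.
  rewrite mulmxDr mulmxDl ER mul0mx addr0 !mulmxA hE mul1mx -mulmxA hE mulmx1.
  by move=> ->; rewrite hEB -mulmxA hE mulmx1.
by rewrite h /R addrC subrK.
Qed.

End Gen2.



Section Lev.
Variable F : finFieldType.
Variable fam : ofamily.
Variable eps : F.

Local Notation Emx n N := (Em F (dG fam n) (dG fam N)).

Lemma hEn n N : (n <= N)%N -> Emx n N *m (Emx n N)^T = 1%:M.
Proof. by move=> le; apply: EEt; apply: dG_mono. Qed.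

Lemma embed_trans n m N (x : 'M[F]_(dG fam n)) : (n <= m)%N -> (m <= N)%N ->
  embed m N (embed n m x) = embed n N x.
Proof.
move=> h1 h2; rewrite !embedE ?(leq_trans h1 h2) // emb_comp Ecomp //.
exact: dG_mono.
Qed.

Lemma embed_inj n N : (n <= N)%N -> injective (@embed F fam n N).
Proof.
move=> le x y; rewrite !embedE // => e.
by rewrite -(emb_inj (hEn le) x) e emb_inj // hEn.
Qed.

Lemma embed_mul n N (x y : 'M[F]_(dG fam n)) : (n <= N)%N ->
  embed n N x *m embed n N y = embed n N (x *m y).
Proof. by move=> le; rewrite !embedE // emb_mul // hEn. Qed.

Lemma embed1 n N : (n <= N)%N -> embed n N (1%:M : 'M[F]_(dG fam n)) = 1%:M.
Proof. by move=> le; rewrite embedE // emb1. Qed.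

Lemma embed_unit n N (x : 'M[F]_(dG fam n)) : (n <= N)%N ->
  (embed n N x \in unitmx) = (x \in unitmx).
Proof.
move=> le; rewrite embedE //; apply/idP/idP.
  exact: emb_unitV (hEn le) x.
exact: emb_unit (hEn le) x.
Qed.

Lemma inG_embed n N (x : 'M[F]_(dG fam n)) : (n <= N)%N ->
  inG eps N (embed n N x) = inG eps n x.
Proof.
move=> le; rewrite /inG embed_unit //; congr (_ && _).
rewrite embedE //; apply: form_embE; first exact: hEn.
  exact: EB.
exact: BE.
Qed.

Lemma embed_inv n N (x : 'M[F]_(dG fam n)) : (n <= N)%N -> x \in unitmx ->
  invmx (embed n N x) = embed n N (invmx x).
Proof. by move=> le xu; rewrite !embedE // emb_inv // hEn. Qed.

Lemma rank_embed n N (x : 'M[F]_(dG fam n)) : (n <= N)%N ->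
  \rank (embed n N x - 1%:M) = \rank (x - 1%:M).
Proof. by move=> le; rewrite embedE // rank_emb1 // hEn. Qed.

Lemma validn_mono n N : validn fam n -> (n <= N)%N -> validn fam N.
Proof. by case: fam => //= h1 h2; apply: leq_trans h1 h2. Qed.

Lemma conj_up nx ny N N' (x : 'M[F]_(dG fam nx)) (y : 'M[F]_(dG fam ny))
  (h : 'M[F]_(dG fam N)) :
  (nx <= N)%N -> (ny <= N)%N -> (N <= N')%N ->
  inG eps N h -> embed ny N y = invmx h *m embed nx N x *m h ->
  exists h' : 'M[F]_(dG fam N'), inG eps N' h' /\
    embed ny N' y = invmx h' *m embed nx N' x *m h'.
Proof.
move=> hx hy le hG e.
exists (embed N N' h); split; first by rewrite inG_embed.
have hu : h \in unitmx by case/andP: hG.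
rewrite -(embed_trans _ hy le) e -!embed_mul // embed_inv //.
by rewrite embed_trans.
Qed.

Lemma sameType_rank (x y : modrep F fam) : sameType eps x y ->
  \rank (rg x - 1%:M) = \rank (rg y - 1%:M).
Proof.
case=> N [_ hx hy [h [hG e]]].
have hu : h \in unitmx by case/andP: hG.
by rewrite -(rank_embed _ hx) -(rank_embed _ hy) e rank_conj.
Qed.

Lemma Xel_embed n m (mu : modrep F fam) (a0 : 'M[F]_(dG fam n)) : (n <= m)%N ->
  Xel eps m mu (embed n m a0) = Xel eps n mu a0.
Proof.
move=> le; rewrite /Xel.
case: excluded_middle_informative => [[h1 h2]|h1];
case: excluded_middle_informative => [[h3 h4]|h3] //.
- case: h3; split; first by rewrite -(inG_embed _ le).
  case: h2 => N [vN hx hy [h [hG e]]].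
  exists N; split => //=; first by apply: leq_trans le hx.
  by exists h; split => //; rewrite -(embed_trans _ le hx).
- case: h1; split; first by rewrite inG_embed.
  case: h4 => N [vN /= hx hy [h [hG e]]].
  have [h' [hG' e']] := conj_up hx hy (leq_maxl N m) hG e.
  exists (maxn N m); split => //=.
  + exact: validn_mono vN (leq_maxl N m).
  + exact: leq_maxr.
  + exact: leq_trans hy (leq_maxl N m).
  exists h'; split => //.
  by rewrite embed_trans // leq_maxr.
Qed.

End Lev.


Section Conv.
Variable F : finFieldType.
Variable fam : ofamily.
Variable eps : F.

Lemma Xel_nat m (mu : modrep F fam) g : Xel eps m mu g \is a Num.nat.
Proof. by rewrite /Xel; case: excluded_middle_informative. Qed.

Lemma Xel_neq0 m (mu : modrep F fam) g : Xel eps m mu g != 0 ->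
  inG eps m g /\ \rank (g - 1%:M) = msize mu.
Proof.
rewrite /Xel; case: excluded_middle_informative => [[h1 h2]|] _ //.
by split => //; rewrite (sameType_rank h2).
Qed.

Lemma rank_mul_le n (a b : 'M[F]_n) :
  (\rank (a *m b - 1%:M)%R <= \rank (a - 1%:M)%R + \rank (b - 1%:M)%R)%N.
Proof.
have -> : a *m b - 1%:M = a *m (b - 1%:M) + (a - 1%:M).
  by rewrite mulmxBr mulmx1 addrA subrK.
apply: leq_trans (mxrank_add _ _) _.
by rewrite addnC leq_add2l mxrankM_maxr.
Qed.

Lemma sum_embed n m (le : (n <= m)%N) (f : 'M[F]_(dG fam m) -> rat) :
  (forall a, f a != 0 -> exists a0, a = embed n m a0) ->
  \sum_a f a = \sum_a0 f (embed n m a0).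
Proof.
move=> H.
rewrite (bigID (fun a => a \in [set embed n m x | x in [set: 'M[F]_(dG fam n)]])) /=.
rewrite [X in _ + X]big1 ?addr0; last first.
  move=> a /negP na; apply/eqP; apply: contraT => fa.
  case: (H a fa) => a0 ea; case: na; apply/imsetP; exists a0 => //.
  by rewrite in_setT.
rewrite big_imset /=; last by move=> x y _ _; apply: embed_inj.
by apply: eq_bigl => x; rewrite in_setT.
Qed.

Lemma conv_zero n m (le : (n <= m)%N) (mu nu : modrep F fam) (g0 : 'M[F]_(dG fam n)) :
  (msize mu + msize nu < \rank (g0 - 1%:M)%R)%N ->
  conv m (Xel eps m mu) (Xel eps m nu) (embed n m g0) = 0.
Proof.
move=> hr; rewrite /conv big1 // => a _; rewrite big1 // => b /eqP hab.
have [Xa|Xa] := eqVneq (Xel eps m mu a) 0; first by rewrite Xa mul0r.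
have [Xb|Xb] := eqVneq (Xel eps m nu b) 0; first by rewrite Xb mulr0.
have [_ ra] := Xel_neq0 Xa; have [_ rb] := Xel_neq0 Xb.
have := rank_mul_le a b; rewrite hab rank_embed // ra rb => h.
by move: (leq_ltn_trans h hr); rewrite ltnn.
Qed.

Lemma conv_embed n m (le : (n <= m)%N) (mu nu : modrep F fam) (g0 : 'M[F]_(dG fam n)) :
  (msize mu + msize nu <= \rank (g0 - 1%:M)%R)%N ->
  conv m (Xel eps m mu) (Xel eps m nu) (embed n m g0) =
  conv n (Xel eps n mu) (Xel eps n nu) g0.
Proof.
move=> hr; rewrite /conv.
under eq_bigr => a _ do rewrite big_mkcond /=.
under [RHS]eq_bigr => a _ do rewrite big_mkcond /=.
rewrite (sum_embed le) => [|a].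
  apply: eq_bigr => a0 _; rewrite (sum_embed le) => [|b].
    apply: eq_bigr => b0 _.
    by rewrite embed_mul // (inj_eq (embed_inj le)) !Xel_embed.
  case: ifP => [/eqP hab|]; last by move=> _; rewrite eqxx.
  move=> nz.
  have Xa : Xel eps m mu (embed n m a0) != 0.
    by apply: contraNneq nz => ->; rewrite mul0r.
  have [hG _] := Xel_neq0 Xa.
  have au : a0 \in unitmx by move: hG; rewrite inG_embed // => /andP[].
  exists (invmx a0 *m g0).
  have eu : embed n m a0 \in unitmx by rewrite embed_unit.
  by rewrite -embed_mul // -embed_inv // -hab mulmxA mulVmx // mul1mx.
move=> nz.
have [b nzb] : exists b, (if a *m b == embed n m g0
    then Xel eps m mu a * Xel eps m nu b else 0) != 0.
  apply/existsP; apply: contraNT nz => /existsPn H.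
  by apply/eqP; apply: big1 => b _; apply/eqP; move: (H b); rewrite negbK.
move: nzb; case: ifP => [/eqP hab|]; last by move=> _; rewrite eqxx.
move=> nzb.
have Xa : Xel eps m mu a != 0 by apply: contraNneq nzb => ->; rewrite mul0r.
have Xb : Xel eps m nu b != 0 by apply: contraNneq nzb => ->; rewrite mulr0.
have [_ ra] := Xel_neq0 Xa; have [_ rb] := Xel_neq0 Xb.
have hE := @hEn F fam _ _ le.
exists (Em F (dG fam n) (dG fam m) *m a *m (Em F (dG fam n) (dG fam m))^T).
rewrite embedE //; apply: (decomp hE (b := b) (g0 := g0)).
  by rewrite hab embedE.
by rewrite ra rb hab rank_embed.
Qed.


End Conv.


Lemma poly_const (p : {poly rat}) (c : rat) (f : nat -> rat) :
  injective f -> (forall k, p.[f k] = c) -> p = c%:P.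
Proof.
move=> fi hp; apply/eqP; rewrite -subr_eq0; apply/negPn/negP => nz.
have := @max_poly_roots _ _ (map f (seq.iota 0%N (size (p - c%:P)))) nz.
rewrite size_map size_iota ltnn => H.
suff : false by [].
apply: H.
  by apply/allP => x /mapP [k _ ->]; rewrite /root hornerD hornerN hornerC hp subrr.
by rewrite (map_inj_uniq fi) seq.iota_uniq.
Qed.

Lemma qint_inj q : (1 < q)%N -> injective (qint q).
Proof.
move=> q2 a b e.
have hq : q%:Q - 1 != 0 by rewrite subr_eq0 pnatr_eq1 (gtn_eqF q2).
move: e; rewrite /qint => /(congr1 (fun x => x * (q%:Q - 1))).
rewrite !divfK // => /addIr; rewrite -!natrX => /eqP; rewrite eqr_nat => /eqP.
exact: expnI.
Qed.

Theorem theorem8p22 (F : finFieldType) (fam : ofamily) (eps : F)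
    (mu nu : modrep F fam) (r : modrep F fam -> {poly rat}) :
  odd #|F| ->
  (forall x : F, x * x != eps) ->
  validRep eps mu -> validRep eps nu ->
  (* r is a function of the modified type *)
  (forall x y : modrep F fam, validRep eps x -> validRep eps y ->
     sameType eps x y -> r x = r y) ->
  (* r_lambda lies in R_q[1/2] *)
  (forall x : modrep F fam, validRep eps x -> inRq #|F| (r x)) ->
  (* X_{mu,m} X_{nu,m} = sum_lambda r_lambda([m]_q) X_{lambda,m} for all m *)
  (forall m : nat, validn fam m ->
     conv m (Xel eps m mu) (Xel eps m nu)
     =1 linX eps m (fun x => (r x).[qint #|F| m])) ->
  forall lam : modrep F fam, validRep eps lam ->
    ((msize lam > msize mu + msize nu)%N -> r lam = 0) /\
    (msize lam = (msize mu + msize nu)%N ->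
       exists z : int, r lam = (z%:~R)%:P).
Proof.
move=> oddF neps vmu vnu hinv hRq hX lam vlam.
have q2 : (1 < #|F|)%N := card_finNzRing_gt1 F.
have [vn0 hg0] := vlam.
have key : forall m, (rn lam <= m)%N -> (r lam).[qint #|F| m] =
    conv m (Xel eps m mu) (Xel eps m nu) (embed (rn lam) m (rg lam)).
  move=> m le; have vm := validn_mono vn0 le.
  rewrite (hX m vm (embed (rn lam) m (rg lam))) /linX inG_embed // hg0.
  congr (_.[_]); apply: hinv => //.
    by split => //=; rewrite inG_embed.
  exists m; split => //=; exists 1%:M; split.
    by rewrite /inG unitmx1 trmx1 mul1mx mulmx1 eqxx.
  by rewrite invmx1 mul1mx mulmx1 embed_trans.
have finj : injective (fun k => qint #|F| (rn lam + k)).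
  by move=> a b /(qint_inj q2) /eqP; rewrite eqn_add2l => /eqP.
split.
  move=> hgt; apply: (poly_const finj) => k.
  by rewrite key ?leq_addr // conv_zero // leq_addr.
move=> heq.
set c := conv (rn lam) (Xel eps (rn lam) mu) (Xel eps (rn lam) nu) (rg lam).
have cn : c \is a Num.nat.
  by apply: rpred_sum => a _; apply: rpred_sum => b _; apply: rpredM; apply: Xel_nat.
have [k ck] := natrP cn.
exists k%:Z.
have -> : r lam = c%:P.
  apply: (poly_const finj) => k'.
  rewrite key ?leq_addr // conv_embed ?leq_addr //.
  by rewrite -heq.
by rewrite ck.
Qed.
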